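(* Let $N^{[0]}$ be a $C^0$ net on the grid $T^{[0]}$ given by $s^{[0]}_i=t^{[0]}_i=i$, $i\in\mathbb{Z}$, having the BMSDD property with constant $L$. Let $\boldsymbol{\gamma}^{[s],[k]}=(\boldsymbol{\alpha}^{[s],[k]},\boldsymbol{\beta}^{[s],[k]})\in\mathscr{W}$ and $\boldsymbol{\gamma}^{[t],[k]}=(\boldsymbol{\alpha}^{[t],[k]},\boldsymbol{\beta}^{[t],[k]})\in\mathscr{W}$, $k\ge 0$, satisfy $$\mu^*:=\sup_{k\ge0}\max\{\mu(\boldsymbol{\gamma}^{[s],[k]}),\mu(\boldsymbol{\gamma}^{[t],[k]})\}<\frac{\sqrt3}{3}.$$ Then the corner cutting algorithm for nets of functions (described in the context) starting from $N^{[0]}$ with these weights is convergent, i.e. the sequence of piecewise Coons patches $\mathcal{C}(N^{[k]})$, $k\ge0$, converges uniformly on $\mathbb{R}^2$.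
   Context: Weights: $\mathscr{W}$ is the set of pairs $(\boldsymbol{\alpha},\boldsymbol{\beta})$ of real bi-infinite sequences with $\inf_{i\in\mathbb{Z}}\min\{\alpha_i,1-\beta_i,\beta_i-\alpha_i\}>0$, and $\mu(\boldsymbol{\alpha},\boldsymbol{\beta}):=\sup_{i\in\mathbb{Z}}\max\{\beta_i-\alpha_i,\,1-\beta_{i-1}+\alpha_i\}$. Grids and nets: for strictly increasing bi-infinite real sequences $(s_i)_{i\in\mathbb{Z}}$, $(t_j)_{j\in\mathbb{Z}}$, unbounded above and below, the grid is $T=\bigcup_i\{s_i\}\times\mathbb{R}\ \cup\ \bigcup_j\mathbb{R}\times\{t_j\}$. A net $N=N(T)$ is a function on $T$ (with values in $\mathbb{R}^m$); it is a $C^0$ net if all u-functions $\phi_j(s)=N(s,t_j)$, $\psi_i(t)=N(s_i,t)$ are continuous on $\mathbb{R}$ (and compatible, $\phi_j(s_i)=\psi_i(t_j)$). The piecewise Coons patch $\mathcal{C}(N):\mathbb{R}^2\to\mathbb{R}^m$ is defined on each rectangle $[s_i,s_{i+1}]\times[t_j,t_{j+1}]$, with $h_1=s_{i+1}-s_i$, $h_2=t_{j+1}-t_j$, by $\mathcal{C}(N)(s,t)=\frac{s_{i+1}-s}{h_1}N(s_i,t)+\frac{s-s_i}{h_1}N(s_{i+1},t)+\frac{t_{j+1}-t}{h_2}N(s,t_j)+\frac{t-t_j}{h_2}N(s,t_{j+1})-B(s,t)$, where $B(s,t)=\frac{s_{i+1}-s}{h_1}\big(\frac{t_{j+1}-t}{h_2}N(s_i,t_j)+\frac{t-t_j}{h_2}N(s_i,t_{j+1})\big)+\frac{s-s_i}{h_1}\big(\frac{t_{j+1}-t}{h_2}N(s_{i+1},t_j)+\frac{t-t_j}{h_2}N(s_{i+1},t_{j+1})\big)$.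 BMSDD: for $\sigma_1\ne\sigma_2$, $\tau_1\ne\tau_2$, $[\sigma_1,\sigma_2;\tau_1,\tau_2]N=\frac{N(\sigma_1,\tau_1)+N(\sigma_2,\tau_2)-N(\sigma_2,\tau_1)-N(\sigma_1,\tau_2)}{(\sigma_1-\sigma_2)(\tau_1-\tau_2)}$; a net $N(T)$ has the BMSDD property with constant $L$ if $\|[\sigma_1,\sigma_2;\tau_1,\tau_2]N\|_\infty\le L$ whenever $\sigma_1\ne\sigma_2$, $\tau_1\ne\tau_2$ and all four points $(\sigma_i,\tau_j)$, $i,j\in\{1,2\}$, lie in $T$. Algorithm: given $N^{[k]}$ on the grid $T^{[k]}$ with lines $s^{[k]}_i$, $t^{[k]}_j$, set $s^{[k+1]}_{2i}=(1-\alpha^{[s],[k]}_i)s^{[k]}_i+\alpha^{[s],[k]}_is^{[k]}_{i+1}$, $s^{[k+1]}_{2i+1}=(1-\beta^{[s],[k]}_i)s^{[k]}_i+\beta^{[s],[k]}_is^{[k]}_{i+1}$, and analogously $t^{[k+1]}_{2j},t^{[k+1]}_{2j+1}$ using $\boldsymbol{\gamma}^{[t],[k]}$; let $T^{[k+1]}$ be the grid with lines $s^{[k+1]}_i$, $t^{[k+1]}_j$, and $N^{[k+1]}=\mathcal{C}(N^{[k]})|_{T^{[k+1]}}$. *)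

(* Defs.v *)
From Stdlib Require Import Reals Lra ZArith List ClassicalEpsilon.
Open Scope R_scope.

(* A vector of R^m is represented as a function nat -> R; only the
   coordinates c < m are meaningful. *)
Definition vec := nat -> R.

Definition vnorm (m : nat) (v : vec) : R :=
  fold_right Rmax 0 (map (fun c => Rabs (v c)) (seq 0 m)).

(* A net is represented as a function on R^2; only its values on the grid
   are ever used. *)
Definition net := R -> R -> vec.

Definition in_W (a b : Z -> R) : Prop :=
  exists d : R, 0 < d /\
    forall i : Z, d <= a i /\ d <= 1 - b i /\ d <= b i - a i.

Definition mu_le (a b : Z -> R) (M : R) : Prop :=
  forall i : Z, b i - a i <= M /\ 1 - b (i - 1)%Z + a i <= M.

Definition refine (a b : Z -> R) (s : Z -> R) : Z -> R :=
  fun n => let i := (n / 2)%Z in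
    if Z.odd n then (1 - b i) * s i + b i * s (i + 1)%Z
    else (1 - a i) * s i + a i * s (i + 1)%Z.

Fixpoint grid (a b : nat -> Z -> R) (k : nat) : Z -> R :=
  match k with
  | O => IZR
  | S k' => refine (a k') (b k') (grid a b k')
  end.

Definition cell (s : Z -> R) (x : R) : Z :=
  epsilon (inhabits 0%Z) (fun i => s i <= x < s (i + 1)%Z).

Definition coons (s t : Z -> R) (N : net) : net :=
  fun x y c =>
    let i := cell s x in
    let j := cell t y in
    let h1 := s (i + 1)%Z - s i in
    let h2 := t (j + 1)%Z - t j in
    let u0 := (s (i + 1)%Z - x) / h1 in
    let u1 := (x - s i) / h1 in
    let v0 := (t (j + 1)%Z - y) / h2 in
    let v1 := (y - t j) / h2 in
    u0 * N (s i) y c + u1 * N (s (i + 1)%Z) y c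
    + v0 * N x (t j) c + v1 * N x (t (j + 1)%Z) c
    - (u0 * (v0 * N (s i) (t j) c + v1 * N (s i) (t (j + 1)%Z) c)
       + u1 * (v0 * N (s (i + 1)%Z) (t j) c + v1 * N (s (i + 1)%Z) (t (j + 1)%Z) c)).

(* The sequence C(N^[k]) produced by the algorithm:
   N^[k+1] = C(N^[k]) restricted to T^[k+1]; since the Coons patch only
   evaluates its argument on the grid, C(N^[k+1]) = coons T^[k+1] (C(N^[k])). *)
Fixpoint patch (aS bS aT bT : nat -> Z -> R) (N0 : net) (k : nat) : net :=
  match k with
  | O => coons (grid aS bS 0) (grid aT bT 0) N0
  | S k' => coons (grid aS bS k) (grid aT bT k) (patch aS bS aT bT N0 k')
  end.

Definition in_grid (s t : Z -> R) (x y : R) : Prop :=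
  (exists i : Z, x = s i) \/ (exists j : Z, y = t j).

Definition C0_net (m : nat) (s t : Z -> R) (N : net) : Prop :=
  (forall (j : Z) (c : nat), (c < m)%nat -> continuity (fun x => N x (t j) c)) /\
  (forall (i : Z) (c : nat), (c < m)%nat -> continuity (fun y => N (s i) y c)).

Definition bmsdd (N : net) (s1 s2 t1 t2 : R) : vec :=
  fun c => (N s1 t1 c + N s2 t2 c - N s2 t1 c - N s1 t2 c) / ((s1 - s2) * (t1 - t2)).

Definition BMSDD (m : nat) (s t : Z -> R) (N : net) (L : R) : Prop :=
  forall s1 s2 t1 t2 : R, s1 <> s2 -> t1 <> t2 ->
    in_grid s t s1 t1 -> in_grid s t s1 t2 ->
    in_grid s t s2 t1 -> in_grid s t s2 t2 ->
    vnorm m (bmsdd N s1 s2 t1 t2) <= L.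

Definition unif_conv (m : nat) (F : nat -> net) : Prop :=
  exists G : net, forall eps : R, 0 < eps ->
    exists K : nat, forall k : nat, (K <= k)%nat ->
      forall x y : R, vnorm m (fun c => F k x y c - G x y c) < eps.

(* Main.v *)
Require Import Defs.
From Stdlib Require Import Reals ZArith.
From Stdlib Require Import Lra Lia List ClassicalEpsilon.
Open Scope R_scope.

Lemma fold_ge (f : nat -> R) n st c : (st <= c < st + n)%nat ->
  Rabs (f c) <= fold_right Rmax 0 (map (fun c => Rabs (f c)) (seq st n)).
Proof.
  revert st; induction n as [|n IH]; intros st H; [lia|].
  simpl. destruct (Nat.eq_dec c st) as [->|Hne].
  - apply Rmax_l.
  - eapply Rle_trans; [apply (IH (S st)); lia| apply Rmax_r].
Qed.

Lemma fold_lt (f : nat -> R) n st eps : 0 < eps ->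
  (forall c, (st <= c < st + n)%nat -> Rabs (f c) < eps) ->
  fold_right Rmax 0 (map (fun c => Rabs (f c)) (seq st n)) < eps.
Proof.
  revert st; induction n as [|n IH]; intros st He H; simpl; [lra|].
  apply Rmax_lub_lt; [apply H; lia|apply IH; auto; intros; apply H; lia].
Qed.

Lemma vnorm_ge m v c : (c < m)%nat -> Rabs (v c) <= vnorm m v.
Proof. intros; unfold vnorm; apply fold_ge; lia. Qed.

Lemma vnorm_lt m v eps : 0 < eps -> (forall c, (c < m)%nat -> Rabs (v c) < eps) ->
  vnorm m v < eps.
Proof. intros; unfold vnorm; apply fold_lt; auto; intros; apply H0; lia. Qed.

Definition interp (s : Z -> R) (f : R -> R) (x : R) : R :=
  let i := cell s x in
  (s (i + 1)%Z - x) / (s (i + 1)%Z - s i) * f (s i)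
  + (x - s i) / (s (i + 1)%Z - s i) * f (s (i + 1)%Z).

Definition goodS (s : Z -> R) : Prop :=
  (forall a b, (a < b)%Z -> s a < s b) /\
  (forall x, s (cell s x) <= x < s (cell s x + 1)%Z).

Lemma interp_form s f x : s (cell s x) < s (cell s x + 1)%Z ->
  interp s f x = f (s (cell s x)) + (x - s (cell s x)) / (s (cell s x + 1)%Z - s (cell s x))
     * (f (s (cell s x + 1)%Z) - f (s (cell s x))).
Proof. intros H. unfold interp. cbv zeta. field. lra. Qed.

Lemma mono_le s : (forall a b, (a < b)%Z -> s a < s b) ->
  forall a b, (a <= b)%Z -> s a <= s b.
Proof.
  intros H a b Hab. destruct (Z.eq_dec a b) as [->|]; [lra|]. left; apply H; lia.
Qed.

Lemma interp_lip s f K : goodS s ->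
  (forall a b, Rabs (f (s a) - f (s b)) <= K * Rabs (s a - s b)) ->
  forall x1 x2, Rabs (interp s f x2 - interp s f x1) <= K * Rabs (x2 - x1).
Proof.
  intros [Hinc Hc] Hf.
  assert (Hmain : forall x1 x2, x1 <= x2 ->
     Rabs (interp s f x2 - interp s f x1) <= K * Rabs (x2 - x1)).
  { intros x1 x2 Hx.
    pose proof (Hc x1) as C1. pose proof (Hc x2) as C2.
    rewrite (interp_form s f x1) by lra. rewrite (interp_form s f x2) by lra.
    revert C1 C2. generalize (cell s x1) (cell s x2). intros i j C1 C2.
    rewrite (Rabs_pos_eq (x2 - x1)) by lra.
    assert (Hloc : forall k x, s k <= x < s (k+1)%Z ->
      Rabs ((x - s k) / (s (k + 1)%Z - s k) * (f (s (k + 1)%Z) - f (s k))) <= K * (x - s k)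
      /\ Rabs ((x - s k) / (s (k + 1)%Z - s k) * (f (s (k + 1)%Z) - f (s k))
                 - (f (s (k + 1)%Z) - f (s k))) <= K * (s (k+1)%Z - x)).
    { intros k x Hk.
      assert (Hh : 0 < s (k+1)%Z - s k) by lra.
      pose proof (Hf (k+1)%Z k) as Hfk. rewrite (Rabs_pos_eq (s (k+1)%Z - s k)) in Hfk by lra.
      split.
      - rewrite Rabs_mult, (Rabs_pos_eq ((x - s k) / _)).
        2:{ apply Rmult_le_pos; [lra| left; apply Rinv_0_lt_compat; lra]. }
        apply Rle_trans with ((x - s k) / (s (k + 1)%Z - s k) * (K * (s (k + 1)%Z - s k))).
        + apply Rmult_le_compat_l; auto. apply Rmult_le_pos; [lra| left; apply Rinv_0_lt_compat; lra].
        + right; field; lra.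
      - replace ((x - s k) / (s (k + 1)%Z - s k) * (f (s (k + 1)%Z) - f (s k)) -
           (f (s (k + 1)%Z) - f (s k))) with
           (- ((s (k+1)%Z - x) / (s (k + 1)%Z - s k) * (f (s (k + 1)%Z) - f (s k)))) by (field; lra).
        rewrite Rabs_Ropp, Rabs_mult, (Rabs_pos_eq ((s (k+1)%Z - x) / _)).
        2:{ apply Rmult_le_pos; [lra| left; apply Rinv_0_lt_compat; lra]. }
        apply Rle_trans with ((s (k+1)%Z - x) / (s (k + 1)%Z - s k) * (K * (s (k + 1)%Z - s k))).
        + apply Rmult_le_compat_l; auto. apply Rmult_le_pos; [lra| left; apply Rinv_0_lt_compat; lra].
        + right; field; lra. }
    destruct (Rle_lt_dec (s (i+1)%Z) (s j)) as [Hle|Hlt].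
    - destruct (Hloc j x2 C2) as [A2 _]. destruct (Hloc i x1 C1) as [_ B1].
      pose proof (Hf j (i+1)%Z) as Hm. rewrite (Rabs_pos_eq (s j - s (i+1)%Z)) in Hm by lra.
      set (P := (x2 - s j) / (s (j + 1)%Z - s j) * (f (s (j + 1)%Z) - f (s j))) in *.
      set (Q := (x1 - s i) / (s (i + 1)%Z - s i) * (f (s (i + 1)%Z) - f (s i))) in *.
      replace (f (s j) + P - (f (s i) + Q)) with
        (P + (f (s j) - f (s (i+1)%Z)) - (Q - (f (s (i + 1)%Z) - f (s i)))) by ring.
      revert A2 B1 Hm. generalize P Q (f (s j) - f (s (i+1)%Z)). intros p q r A B Cc.
      unfold Rabs in *; repeat destruct Rcase_abs; lra.
    - assert (Hji : (j < i + 1)%Z).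
      { destruct (Z_lt_le_dec j (i+1)) as [|Hge]; auto. pose proof (mono_le s Hinc _ _ Hge). lra. }
      assert (Hij : (i < j + 1)%Z).
      { destruct (Z_lt_le_dec i (j+1)) as [|Hge]; auto. pose proof (mono_le s Hinc _ _ Hge). lra. }
      assert (j = i) by lia. subst j.
      assert (Hh : 0 < s (i+1)%Z - s i) by lra.
      pose proof (Hf (i+1)%Z i) as Hfk. rewrite (Rabs_pos_eq (s (i+1)%Z - s i)) in Hfk by lra.
      replace (f (s i) + (x2 - s i) / (s (i + 1)%Z - s i) * (f (s (i + 1)%Z) - f (s i)) -
        (f (s i) + (x1 - s i) / (s (i + 1)%Z - s i) * (f (s (i + 1)%Z) - f (s i))))
        with ((x2 - x1) / (s (i + 1)%Z - s i) * (f (s (i + 1)%Z) - f (s i))) by (field; lra).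
      rewrite Rabs_mult, (Rabs_pos_eq ((x2 - x1) / _)).
      2:{ apply Rmult_le_pos; [lra| left; apply Rinv_0_lt_compat; lra]. }
      apply Rle_trans with ((x2 - x1) / (s (i + 1)%Z - s i) * (K * (s (i + 1)%Z - s i))).
      + apply Rmult_le_compat_l; auto. apply Rmult_le_pos; [lra| left; apply Rinv_0_lt_compat; lra].
      + right; field; lra. }
  intros x1 x2. destruct (Rle_lt_dec x1 x2). apply Hmain; auto.
  rewrite Rabs_minus_sym, (Rabs_minus_sym x2). apply Hmain; lra.
Qed.

Definition D2 (g : R -> R -> R) x1 x2 y1 y2 := g x1 y1 + g x2 y2 - g x2 y1 - g x1 y2.

Definition PB (g : R -> R -> R) K := forall x1 x2 y1 y2,
  Rabs (D2 g x1 x2 y1 y2) <= K * Rabs (x1 - x2) * Rabs (y1 - y2).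

Lemma interp_minus s f1 f2 x :
  interp s (fun z => f1 z - f2 z) x = interp s f1 x - interp s f2 x.
Proof. unfold interp; cbv beta zeta; ring. Qed.

Lemma D2_interp_x s g K : goodS s ->
  (forall a b y1 y2, Rabs (D2 g (s a) (s b) y1 y2) <= K * Rabs (s a - s b) * Rabs (y1 - y2)) ->
  PB (fun x y => interp s (fun x' => g x' y) x) K.
Proof.
  intros Hs Hn x1 x2 y1 y2. unfold D2.
  replace (interp s (fun x' : R => g x' y1) x1 + interp s (fun x' : R => g x' y2) x2 -
     interp s (fun x' : R => g x' y1) x2 - interp s (fun x' : R => g x' y2) x1)
   with (interp s (fun x' => g x' y2 - g x' y1) x2 - interp s (fun x' => g x' y2 - g x' y1) x1)
   by (rewrite !interp_minus; ring).
  eapply Rle_trans.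
  - apply (interp_lip s _ (K * Rabs (y1 - y2)) Hs).
    intros a b. pose proof (Hn a b y1 y2) as H. unfold D2 in H.
    replace (g (s a) y2 - g (s a) y1 - (g (s b) y2 - g (s b) y1)) with
      (- (g (s a) y1 + g (s b) y2 - g (s b) y1 - g (s a) y2)) by ring.
    rewrite Rabs_Ropp. lra.
  - rewrite (Rabs_minus_sym x2 x1). right; ring.
Qed.

Definition swap (g : R -> R -> R) := fun y x => g x y.

Lemma D2_swap g x1 x2 y1 y2 : D2 g x1 x2 y1 y2 = D2 (swap g) y1 y2 x1 x2.
Proof. unfold D2, swap; ring. Qed.

Lemma D2_interp_y t g K : goodS t ->
  (forall x1 x2 a b, Rabs (D2 g x1 x2 (t a) (t b)) <= K * Rabs (x1 - x2) * Rabs (t a - t b)) ->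
  PB (fun x y => interp t (fun y' => g x y') y) K.
Proof.
  intros Ht Hn x1 x2 y1 y2. rewrite D2_swap.
  pose proof (D2_interp_x t (swap g) K Ht) as H.
  assert (H' : PB (fun x y : R => interp t (fun x' : R => swap g x' y) x) K).
  { apply H. intros a b y3 y4. rewrite <- D2_swap. 
    eapply Rle_trans; [apply Hn|]. right; ring. }
  eapply Rle_trans; [apply H'|]. unfold swap. right; ring.
Qed.

Lemma coons_dec s t (G : net) x y c :
  coons s t G x y c = interp s (fun x' => G x' y c) x + interp t (fun y' => G x y' c) y
    - interp s (fun x' => interp t (fun y' => G x' y' c) y) x.
Proof. unfold coons, interp; cbv beta zeta; ring. Qed.

Lemma abs3 a b d P : Rabs a <= P -> Rabs b <= P -> Rabs d <= P -> Rabs (a + b - d) <= 3 * P.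
Proof. intros; unfold Rabs in *; repeat destruct Rcase_abs; lra. Qed.

Lemma coons_PB s t (G : net) c K : goodS s -> goodS t ->
  (forall x1 x2 y1 y2, ((exists a b, x1 = s a /\ x2 = s b) \/ (exists a b, y1 = t a /\ y2 = t b)) ->
     Rabs (D2 (fun x y => G x y c) x1 x2 y1 y2) <= K * Rabs (x1 - x2) * Rabs (y1 - y2)) ->
  PB (fun x y => coons s t G x y c) (3 * K).
Proof.
  intros Hs Ht HG x1 x2 y1 y2.
  set (A := fun x y => interp s (fun x' => G x' y c) x).
  set (B := fun x y => interp t (fun y' => G x y' c) y).
  set (D := fun x y => interp s (fun x' => B x' y) x).
  assert (E : D2 (fun x y => coons s t G x y c) x1 x2 y1 y2 =
     D2 A x1 x2 y1 y2 + D2 B x1 x2 y1 y2 - D2 D x1 x2 y1 y2).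
  { unfold D2. cbv beta. rewrite !coons_dec. unfold D, A, B. cbv beta. ring. }
  rewrite E.
  assert (HB : PB B K).
  { apply D2_interp_y; auto. intros. apply HG. right; eauto. }
  replace (3 * K * Rabs (x1 - x2) * Rabs (y1 - y2)) with (3 * (K * Rabs (x1 - x2) * Rabs (y1 - y2))) by ring.
  apply abs3.
  - apply D2_interp_x; auto. intros. apply HG. left; eauto.
  - apply HB.
  - apply D2_interp_x; auto.
Qed.

Lemma PB_nonneg g K : PB g K -> 0 <= K.
Proof.
  intros H. pose proof (H 0 1 0 1) as H1.
  replace (Rabs (0 - 1)) with 1 in H1 by (rewrite Rabs_minus_sym, Rabs_pos_eq; lra).
  pose proof (Rabs_pos (D2 g 0 1 0 1)). lra.
Qed.

Lemma coons_err s t (G : net) c K hs ht : goodS s -> goodS t ->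
  PB (fun x y => G x y c) K ->
  (forall i, s (i+1)%Z - s i <= hs) -> (forall j, t (j+1)%Z - t j <= ht) ->
  forall x y, Rabs (coons s t G x y c - G x y c) <= K * hs * ht.
Proof.
  intros [_ Hs] [_ Ht] HP Hhs Hht x y.
  pose proof (PB_nonneg _ _ HP) as HK.
  unfold coons; cbv zeta.
  pose proof (Hs x) as Cx. pose proof (Ht y) as Cy.
  pose proof (Hhs (cell s x)) as Hx. pose proof (Hht (cell t y)) as Hy.
  revert Cx Cy Hx Hy. generalize (cell s x) (cell t y). intros i j Cx Cy Hx Hy.
  set (u1 := (x - s i) / (s (i + 1)%Z - s i)).
  set (u0 := (s (i + 1)%Z - x) / (s (i + 1)%Z - s i)).
  set (v1 := (y - t j) / (t (j + 1)%Z - t j)).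
  set (v0 := (t (j + 1)%Z - y) / (t (j + 1)%Z - t j)).
  assert (Hu : u0 = 1 - u1) by (unfold u0, u1; field; lra).
  assert (Hv : v0 = 1 - v1) by (unfold v0, v1; field; lra).
  assert (Hu1 : 0 <= u1 <= 1).
  { unfold u1; split. apply Rmult_le_pos; [lra| left; apply Rinv_0_lt_compat; lra].
    apply Rmult_le_reg_r with (s (i + 1)%Z - s i); [lra|]. unfold Rdiv.
    rewrite Rmult_assoc, Rinv_l by lra. lra. }
  assert (Hv1 : 0 <= v1 <= 1).
  { unfold v1; split. apply Rmult_le_pos; [lra| left; apply Rinv_0_lt_compat; lra].
    apply Rmult_le_reg_r with (t (j + 1)%Z - t j); [lra|]. unfold Rdiv.
    rewrite Rmult_assoc, Rinv_l by lra. lra. }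
  set (g := fun x y => G x y c) in *.
  assert (HD : forall a b, (a = i \/ a = (i+1)%Z) -> (b = j \/ b = (j+1)%Z) ->
     Rabs (D2 g x (s a) y (t b)) <= K * hs * ht).
  { intros a b Ha Hb. eapply Rle_trans; [apply HP|].
    rewrite !Rmult_assoc. apply Rmult_le_compat_l; auto.
    apply Rmult_le_compat; try apply Rabs_pos.
    - destruct Ha as [->| ->]; unfold Rabs; destruct Rcase_abs; lra.
    - destruct Hb as [->| ->]; unfold Rabs; destruct Rcase_abs; lra. }
  pose proof (HD i j (or_introl eq_refl) (or_introl eq_refl)) as D00.
  pose proof (HD i (j+1)%Z (or_introl eq_refl) (or_intror eq_refl)) as D01.
  pose proof (HD (i+1)%Z j (or_intror eq_refl) (or_introl eq_refl)) as D10.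
  pose proof (HD (i+1)%Z (j+1)%Z (or_intror eq_refl) (or_intror eq_refl)) as D11.
  change (G ?a ?b c) with (g a b).
  replace (u0 * g (s i) y + u1 * g (s (i + 1)%Z) y + v0 * g x (t j) + v1 * g x (t (j + 1)%Z) -
   (u0 * (v0 * g (s i) (t j) + v1 * g (s i) (t (j + 1)%Z)) +
    u1 * (v0 * g (s (i + 1)%Z) (t j) + v1 * g (s (i + 1)%Z) (t (j + 1)%Z))) - g x y)
   with (- (u0 * v0 * D2 g x (s i) y (t j) + u0 * v1 * D2 g x (s i) y (t (j+1)%Z)
          + u1 * v0 * D2 g x (s (i+1)%Z) y (t j) + u1 * v1 * D2 g x (s (i+1)%Z) y (t (j+1)%Z)))
   by (rewrite Hu, Hv; unfold D2; ring).
  rewrite Rabs_Ropp.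
  revert D00 D01 D10 D11. generalize (D2 g x (s i) y (t j)) (D2 g x (s i) y (t (j+1)%Z))
    (D2 g x (s (i+1)%Z) y (t j)) (D2 g x (s (i+1)%Z) y (t (j+1)%Z)). intros d1 d2 d3 d4 E1 E2 E3 E4.
  rewrite Hu, Hv. set (E := K * hs * ht) in *.
  assert (P1 : 0 <= (1 - u1) * (1 - v1)) by (apply Rmult_le_pos; lra).
  assert (P2 : 0 <= (1 - u1) * v1) by (apply Rmult_le_pos; lra).
  assert (P3 : 0 <= u1 * (1 - v1)) by (apply Rmult_le_pos; lra).
  assert (P4 : 0 <= u1 * v1) by (apply Rmult_le_pos; lra).
  assert (T : forall w d, 0 <= w -> Rabs d <= E -> Rabs (w * d) <= w * E).
  { intros w d Hw Hd. rewrite Rabs_mult, Rabs_pos_eq by auto. apply Rmult_le_compat_l; auto. }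
  pose proof (T _ _ P1 E1). pose proof (T _ _ P2 E2). pose proof (T _ _ P3 E3). pose proof (T _ _ P4 E4).
  replace E with ((1 - u1) * (1 - v1) * E + (1 - u1) * v1 * E + u1 * (1 - v1) * E + u1 * v1 * E) by ring.
  eapply Rle_trans; [apply Rabs_triang|]. eapply Rle_trans; [apply Rplus_le_compat_r, Rabs_triang|].
  eapply Rle_trans; [apply Rplus_le_compat_r, Rplus_le_compat_r, Rabs_triang|].
  lra.
Qed.

Lemma d1 i : ((2*i+1)/2 = i)%Z.
Proof. rewrite Z.mul_comm, Z.div_add_l by lia. rewrite Zdiv_1_l; lia. Qed.
Lemma d0 i : ((2*i)/2 = i)%Z.
Proof. rewrite Z.mul_comm, Z.div_mul by lia. lia. Qed.
Lemma par n : (n = 2*(n/2) \/ n = 2*(n/2)+1)%Z.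
Proof. pose proof (Z.div_mod n 2). pose proof (Z.mod_pos_bound n 2). lia. Qed.

Lemma refine_even a b s i : refine a b s (2*i)%Z = (1 - a i) * s i + a i * s (i+1)%Z.
Proof. unfold refine. rewrite Z.odd_even, d0. reflexivity. Qed.
Lemma refine_odd a b s i : refine a b s (2*i+1)%Z = (1 - b i) * s i + b i * s (i+1)%Z.
Proof. unfold refine. rewrite Z.odd_odd, d1. reflexivity. Qed.

Lemma strict_from_step (s : Z -> R) : (forall n, s n < s (n+1)%Z) ->
  forall a b, (a < b)%Z -> s a < s b.
Proof.
  intros H a b Hab.
  replace b with (a + Z.of_nat (S (Z.to_nat (b - a - 1))))%Z by lia.
  generalize (Z.to_nat (b - a - 1)). induction n as [|n IH].
  - replace (a + Z.of_nat 1)%Z with (a+1)%Z by lia. apply H.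
  - replace (a + Z.of_nat (S (S n)))%Z with ((a + Z.of_nat (S n)) + 1)%Z by lia.
    eapply Rlt_trans; [apply IH| apply H].
Qed.

Lemma good_of (s : Z -> R) : (forall n, s n < s (n+1)%Z) ->
  (forall x, exists i, s i <= x < s (i+1)%Z) -> goodS s.
Proof.
  intros H1 H2. split. apply strict_from_step; auto.
  intros x. unfold cell. exact (epsilon_spec _ (fun i => s i <= x < s (i + 1)%Z) (H2 x)).
Qed.

Lemma grid_props a b M : (forall k, in_W (a k) (b k)) -> (forall k, mu_le (a k) (b k) M) ->
  forall k, (forall n, grid a b k n < grid a b k (n+1)%Z) /\
    (forall x, exists i, grid a b k i <= x < grid a b k (i+1)%Z) /\
    (forall n, grid a b k (n+1)%Z - grid a b k n <= M ^ k).
Proof.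
  intros HW Hmu k. induction k as [|k [IH1 [IH2 IH3]]].
  - simpl. split; [|split].
    + intros n. rewrite plus_IZR. lra.
    + intros x. exists (up x - 1)%Z. pose proof (archimed x).
      rewrite plus_IZR, minus_IZR. simpl. lra.
    + intros n. rewrite plus_IZR. lra.
  - simpl grid. set (s := grid a b k) in *.
    destruct (HW k) as [d [Hd HWk]]. pose proof (Hmu k) as Hm.
    assert (HM : 0 <= M).
    { destruct (HWk 0%Z) as [_ [_ X]]. destruct (Hm 0%Z) as [Y _]. lra. }
    assert (Hpos : 0 <= M ^ k) by (apply pow_le; auto).
    assert (Hstep : forall n, 0 < refine (a k) (b k) s (n + 1)%Z - refine (a k) (b k) s n <= M ^ S k).
    { intros n. destruct (par n) as [E|E]; rewrite E; set (i := (n/2)%Z).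
      - replace (2 * i + 1)%Z with (2*i+1)%Z by lia.
        rewrite refine_even, refine_odd.
        destruct (HWk i) as [A1 [A2 A3]]. destruct (Hm i) as [B1 _].
        pose proof (IH1 i). pose proof (IH3 i).
        replace ((1 - b k i) * s i + b k i * s (i + 1)%Z - ((1 - a k i) * s i + a k i * s (i + 1)%Z))
          with ((b k i - a k i) * (s (i+1)%Z - s i)) by ring.
        split. apply Rmult_lt_0_compat; lra.
        simpl. apply Rmult_le_compat; lra.
      - replace (2 * i + 1 + 1)%Z with (2*(i+1))%Z by lia.
        rewrite refine_even, refine_odd.
        destruct (HWk i) as [A1 [A2 A3]]. destruct (HWk (i+1)%Z) as [C1 [C2 C3]].
        destruct (Hm (i+1)%Z) as [_ B2]. replace (i + 1 - 1)%Z with i in B2 by lia.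
        pose proof (IH1 i). pose proof (IH3 i). pose proof (IH1 (i+1)%Z). pose proof (IH3 (i+1)%Z).
        replace ((1 - a k (i + 1)%Z) * s (i + 1)%Z + a k (i + 1)%Z * s (i + 1 + 1)%Z -
           ((1 - b k i) * s i + b k i * s (i + 1)%Z))
          with ((1 - b k i) * (s (i+1)%Z - s i) + a k (i+1)%Z * (s (i+1+1)%Z - s (i+1)%Z)) by ring.
        split.
        + apply Rplus_lt_le_0_compat. apply Rmult_lt_0_compat; lra. apply Rmult_le_pos; lra.
        + simpl. apply Rle_trans with ((1 - b k i) * M^k + a k (i+1)%Z * M^k).
          apply Rplus_le_compat; apply Rmult_le_compat_l; lra.
          replace ((1 - b k i) * M^k + a k (i+1)%Z * M^k) with ((1 - b k i + a k (i+1)%Z) * M^k) by ring.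
          apply Rmult_le_compat_r; lra. }
    split; [|split].
    + intros n. pose proof (Hstep n). lra.
    + intros x. destruct (IH2 x) as [i Hi].
      destruct (HWk (i-1)%Z) as [A1 [A2 A3]]. destruct (HWk (i+1)%Z) as [C1 [C2 C3]].
      pose proof (IH1 (i-1)%Z) as S1. replace (i - 1 + 1)%Z with i in S1 by lia.
      pose proof (IH1 (i+1)%Z) as S2.
      assert (P1 : refine (a k) (b k) s (2*(i-1)+1)%Z <= s i).
      { rewrite refine_odd. replace (i - 1 + 1)%Z with i by lia.
        replace ((1 - b k (i - 1)%Z) * s (i - 1)%Z + b k (i - 1)%Z * s i) with
          (s i - (1 - b k (i-1)%Z) * (s i - s (i-1)%Z)) by ring.
        pose proof (Rmult_le_pos (1 - b k (i-1)%Z) (s i - s (i-1)%Z)). lra. }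
      assert (P4 : s (i+1)%Z <= refine (a k) (b k) s (2*(i+1))%Z).
      { rewrite refine_even.
        replace ((1 - a k (i + 1)%Z) * s (i + 1)%Z + a k (i + 1)%Z * s (i + 1 + 1)%Z) with
          (s (i+1)%Z + a k (i+1)%Z * (s (i+1+1)%Z - s (i+1)%Z)) by ring.
        pose proof (Rmult_le_pos (a k (i+1)%Z) (s (i+1+1)%Z - s (i+1)%Z)). lra. }
      destruct (Rlt_le_dec x (refine (a k) (b k) s (2*i)%Z)).
      * exists (2*(i-1)+1)%Z. replace (2 * (i - 1) + 1 + 1)%Z with (2*i)%Z by lia. lra.
      * destruct (Rlt_le_dec x (refine (a k) (b k) s (2*i+1)%Z)).
        -- exists (2*i)%Z. lra.
        -- exists (2*i+1)%Z. replace (2 * i + 1 + 1)%Z with (2*(i+1))%Z by lia. lra.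
    + intros n. apply Hstep.
Qed.

Lemma geom (u : nat -> R) D r : 0 <= r < 1 -> 0 <= D ->
  (forall k, Rabs (u (S k) - u k) <= D * r ^ k) ->
  (exists l, Un_cv u l) /\ (forall l, Un_cv u l -> forall n, Rabs (u n - l) <= D / (1 - r) * r ^ n).
Proof.
  intros Hr HD Hs. set (C := D / (1 - r)).
  assert (HC : 0 <= C) by (unfold C; apply Rmult_le_pos; [lra| left; apply Rinv_0_lt_compat; lra]).
  assert (HCD : C * (1 - r) = D) by (unfold C; field; lra).
  assert (Tail : forall n p, Rabs (u n - u (n + p)%nat) <= C * r ^ n - C * r ^ (n + p)).
  { intros n p. induction p as [|p IH].
    - rewrite Nat.add_0_r. replace (u n - u n) with 0 by ring. rewrite Rabs_R0. lra.
    - rewrite Nat.add_succ_r.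
      replace (u n - u (S (n + p))) with ((u n - u (n + p)%nat) + (- (u (S (n+p)) - u (n+p)%nat))) by ring.
      eapply Rle_trans; [apply Rabs_triang|]. rewrite Rabs_Ropp.
      pose proof (Hs (n + p)%nat). simpl pow.
      replace (D * r ^ (n + p)) with (C * r ^ (n+p) - C * (r * r ^ (n + p))) in H
        by (rewrite <- HCD; ring). lra. }
  assert (Tail2 : forall n p, Rabs (u n - u (n + p)%nat) <= C * r ^ n).
  { intros n p. pose proof (Tail n p). pose proof (pow_le r (n+p) (proj1 Hr)).
    pose proof (Rmult_le_pos _ _ HC H0). lra. }
  split.
  - assert (Hc : Cauchy_crit u).
    { intros eps He. destruct (pow_lt_1_zero r ltac:(rewrite Rabs_pos_eq; lra) (eps / (C + 1)))
        as [N HN]. { apply Rdiv_lt_0_compat; lra. }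
      exists N. intros n m Hn Hm. unfold R_dist.
      assert (Hb : forall n, (n >= N)%nat -> C * r ^ n < eps).
      { intros q Hq. pose proof (HN q Hq). rewrite Rabs_pos_eq in H by (apply pow_le; lra).
        apply Rle_lt_trans with (C * (eps / (C + 1))).
        apply Rmult_le_compat_l; lra.
        replace (C * (eps / (C + 1))) with (eps - eps / (C+1)) by (field; lra).
        pose proof (Rdiv_lt_0_compat eps (C+1) He ltac:(lra)). lra. }
      destruct (Nat.le_ge_cases n m).
      + replace m with (n + (m - n))%nat by lia. eapply Rle_lt_trans; [apply Tail2| apply Hb; lia].
      + replace n with (m + (n - m))%nat by lia. rewrite Rabs_minus_sym.
        eapply Rle_lt_trans; [apply Tail2| apply Hb; lia]. }
    destruct (R_complete u Hc) as [l Hl]. exists l; auto.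
  - intros l Hl n. fold C. destruct (Rle_lt_dec (Rabs (u n - l)) (C * r ^ n)) as [|Hlt]; auto.
    exfalso. destruct (Hl (Rabs (u n - l) - C * r ^ n)) as [N HN]; [lra|].
    pose proof (HN (n + N)%nat ltac:(lia)) as H1. unfold R_dist in H1.
    pose proof (Tail2 n N).
    pose proof (Rabs_triang (u n - u (n + N)%nat) (u (n + N)%nat - l)).
    replace (u n - u (n + N)%nat + (u (n + N)%nat - l)) with (u n - l) in H0 by ring. lra.
Qed.

Theorem theorem2 (m : nat) (N0 : net) (L : R)
  (aS bS aT bT : nat -> Z -> R) :
  C0_net m IZR IZR N0 ->
  BMSDD m IZR IZR N0 L ->
  (forall k : nat, in_W (aS k) (bS k)) ->
  (forall k : nat, in_W (aT k) (bT k)) ->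
  (exists M : R, M < sqrt 3 / 3 /\
     forall k : nat, mu_le (aS k) (bS k) M /\ mu_le (aT k) (bT k) M) ->
  unif_conv m (patch aS bS aT bT N0).
Proof.
  intros _ HB HWs HWt [M [HM3 Hmu]].
  set (F := patch aS bS aT bT N0).
  set (L' := Rmax 0 L).
  assert (HL' : 0 <= L') by apply Rmax_l.
  assert (HM : 0 <= M).
  { destruct (HWs 0%nat) as [d [Hd H]]. destruct (H 0%Z) as [_ [_ X]].
    destruct (Hmu 0%nat) as [Hm _]. destruct (Hm 0%Z). lra. }
  set (r := 3 * M * M).
  assert (Hr : 0 <= r < 1).
  { unfold r. pose proof (sqrt_sqrt 3 ltac:(lra)). split. 
    apply Rmult_le_pos; [lra|auto]. nra. }
  pose proof (grid_props aS bS M HWs (fun k => proj1 (Hmu k))) as GS.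
  pose proof (grid_props aT bT M HWt (fun k => proj2 (Hmu k))) as GT.
  assert (goodSk : forall k, goodS (grid aS bS k)).
  { intros k. destruct (GS k) as [A [B _]]. apply good_of; auto. }
  assert (goodTk : forall k, goodS (grid aT bT k)).
  { intros k. destruct (GT k) as [A [B _]]. apply good_of; auto. }
  assert (HPB : forall c, (c < m)%nat -> forall k, PB (fun x y => F k x y c) (3 ^ S k * L')).
  { intros c Hc k. induction k as [|k IH].
    - change (PB (fun x y => coons (grid aS bS 0) (grid aT bT 0) N0 x y c) (3 ^ 1 * L')).
      replace (3 ^ 1 * L') with (3 * L') by (simpl; ring).
      apply coons_PB; auto. simpl grid.
      intros x1 x2 y1 y2 Hg.
      destruct (Req_dec x1 x2) as [->|Hx].
      { unfold D2. replace (N0 x2 y1 c + N0 x2 y2 c - N0 x2 y1 c - N0 x2 y2 c) with 0 by ring.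
        rewrite Rabs_R0. apply Rmult_le_pos; [apply Rmult_le_pos|]; auto; apply Rabs_pos. }
      destruct (Req_dec y1 y2) as [->|Hy].
      { unfold D2. replace (N0 x1 y2 c + N0 x2 y2 c - N0 x2 y2 c - N0 x1 y2 c) with 0 by ring.
        rewrite Rabs_R0. apply Rmult_le_pos; [apply Rmult_le_pos|]; auto; apply Rabs_pos. }
      assert (Hv : vnorm m (bmsdd N0 x1 x2 y1 y2) <= L).
      { apply HB; auto; unfold in_grid;
        destruct Hg as [[a [b [-> ->]]]|[a [b [-> ->]]]]; eauto. }
      pose proof (vnorm_ge m (bmsdd N0 x1 x2 y1 y2) c Hc) as Hc'.
      unfold bmsdd in Hc'. cbv beta in Hc'. unfold D2.
      assert (Hxy : (x1 - x2) * (y1 - y2) <> 0).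
      { apply Rmult_integral_contrapositive; split; lra. }
      replace (N0 x1 y1 c + N0 x2 y2 c - N0 x2 y1 c - N0 x1 y2 c) with
        ((N0 x1 y1 c + N0 x2 y2 c - N0 x2 y1 c - N0 x1 y2 c) / ((x1 - x2) * (y1 - y2)) * ((x1 - x2) * (y1 - y2)))
        by (field; assert (x1 - x2 <> 0) by (intro; apply Hx; lra); assert (y1 - y2 <> 0) by (intro; apply Hy; lra); tauto).
      rewrite Rabs_mult, Rabs_mult, Rmult_assoc.
      apply Rmult_le_compat_r; [apply Rmult_le_pos; apply Rabs_pos|].
      unfold L'. eapply Rle_trans; [|apply Rmax_r]. eapply Rle_trans; [apply Hc'|]. exact Hv.
    - change (PB (fun x y => coons (grid aS bS (S k)) (grid aT bT (S k)) (F k) x y c) (3 ^ S (S k) * L')).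
      replace (3 ^ S (S k) * L') with (3 * (3 ^ S k * L')) by (simpl; ring).
      apply coons_PB; auto. }
  assert (Hstep : forall c, (c < m)%nat -> forall k x y,
     Rabs (F (S k) x y c - F k x y c) <= (L' * r) * r ^ k).
  { intros c Hc k x y.
    change (F (S k) x y c) with (coons (grid aS bS (S k)) (grid aT bT (S k)) (F k) x y c).
    eapply Rle_trans.
    - apply (coons_err _ _ (F k) c (3 ^ S k * L') (M ^ S k) (M ^ S k)); auto.
      + intros i. destruct (GS (S k)) as [_ [_ X]]. apply X.
      + intros i. destruct (GT (S k)) as [_ [_ X]]. apply X.
    - right. unfold r. simpl. rewrite !Rpow_mult_distr. ring. }
  set (G := fun x y c => epsilon (inhabits 0) (fun l => Un_cv (fun k => F k x y c) l)).
  exists G. intros eps Heps.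
  set (C := L' * r / (1 - r)).
  assert (HC : 0 <= C).
  { unfold C. apply Rmult_le_pos; [apply Rmult_le_pos; lra| left; apply Rinv_0_lt_compat; lra]. }
  destruct (pow_lt_1_zero r ltac:(rewrite Rabs_pos_eq; lra) (eps / (C + 1))) as [N HN].
  { apply Rdiv_lt_0_compat; lra. }
  exists N. intros k Hk x y. apply vnorm_lt; auto. intros c Hc.
  destruct (geom (fun k => F k x y c) (L' * r) r Hr ltac:(apply Rmult_le_pos; lra)
     (fun k => Hstep c Hc k x y)) as [Hex Hbd].
  pose proof (epsilon_spec (inhabits 0) (fun l => Un_cv (fun k => F k x y c) l) Hex) as Hl.
  pose proof (Hbd _ Hl k) as Hb. fold C in Hb. cbv beta in Hb. fold (G x y c) in Hb.
  eapply Rle_lt_trans; [apply Hb|].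
  pose proof (HN k Hk) as H. rewrite Rabs_pos_eq in H by (apply pow_le; lra).
  apply Rle_lt_trans with (C * (eps / (C + 1))).
  apply Rmult_le_compat_l; lra.
  replace (C * (eps / (C + 1))) with (eps - eps / (C+1)) by (field; lra).
  pose proof (Rdiv_lt_0_compat eps (C+1) Heps ltac:(lra)). lra.
Qed.
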